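(* Let $\mathfrak{n}=(V,\{\,,\})$ be a $2$-step nilpotent Lie algebra over $K$ with $Z(\mathfrak{n})\subseteq\{\mathfrak{n},\mathfrak{n}\}$, and let $x* y$ be an LR-structure on $\mathfrak{n}$ satisfying $\{\mathfrak{n},\mathfrak{n}\}*\mathfrak{n}=0$. Then the LR-structure is complete, i.e. all left multiplications $y\mapsto x*y$ are nilpotent.
   Context: $K$ is a field of characteristic zero, $V$ a finite-dimensional $K$-vector space. An LR-structure on a Lie algebra $\mathfrak{n}=(V,\{\,,\})$ is a bilinear product $x*y$ on $V$ such that for all $x,y,z\in V$: $x*y-y*x=\{x,y\}$, $x*(y*z)=y*(x*z)$, and $x*\{y,z\}=\{x*y,z\}+\{y,x*z\}$ (equivalently, $x\cdot y:=-x*y$ is a post-Lie algebra structure on the pair (abelian Lie algebra on $V$, $\mathfrak{n}$)). $Z(\mathfrak{n})$ is the center, $\{\mathfrak{n},\mathfrak{n}\}$ the derived algebra. A Lie algebra is called $2$-step nilpotent here if it is nilpotent of class at most $2$. *)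

(* Defs.v *)
From HB Require Import structures.
From mathcomp Require Import all_boot all_order all_algebra.
Set Implicit Arguments. Unset Strict Implicit. Unset Printing Implicit Defensive.
Import GRing.Theory.
Local Open Scope ring_scope.

Section Defs.
Variables (K : fieldType) (V : vectType K).

Definition bilinear_op (m : V -> V -> V) : Prop :=
  (forall (a : K) (x y z : V), m (a *: x + y) z = a *: m x z + m y z) /\
  (forall (a : K) (x y z : V), m x (a *: y + z) = a *: m x y + m x z).

Definition is_lie_bracket (br : V -> V -> V) : Prop :=
  [/\ bilinear_op br,
      (forall x, br x x = 0) &
      (forall x y z, br x (br y z) + br y (br z x) + br z (br x y) = 0)].

Definition two_step_nilpotent (br : V -> V -> V) : Prop :=
  forall x y z, br (br x y) z = 0.

Definition in_center (br : V -> V -> V) (z : V) : Prop :=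
  forall y, br z y = 0.

(* derived algebra {n,n}: the linear span of all brackets; by bilinearity
   this is the set of finite sums of brackets *)
Definition in_derived (br : V -> V -> V) (z : V) : Prop :=
  exists s : seq (V * V), z = \sum_(p <- s) br p.1 p.2.

Definition is_LR_structure (br mul : V -> V -> V) : Prop :=
  [/\ bilinear_op mul,
      (forall x y, mul x y - mul y x = br x y),
      (forall x y z, mul x (mul y z) = mul y (mul x z)) &
      (forall x y z, mul x (br y z) = br (mul x y) z + br y (mul x z))].

Definition derived_mul_zero (br mul : V -> V -> V) : Prop :=
  forall u v, in_derived br u -> mul u v = 0.

Definition nilpotent_map (f : V -> V) : Prop :=
  exists n : nat, forall y, iter n f y = 0.

Definition complete_LR (mul : V -> V -> V) : Prop :=
  forall x, nilpotent_map (mul x).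
End Defs.

(* Main.v *)
Require Import Defs.
From HB Require Import structures.
From mathcomp Require Import all_boot all_order all_algebra.
Import GRing.Theory.
Local Open Scope ring_scope.

Section Helpers.
Variables (K : fieldType) (V : vectType K).

Lemma bil_D1 (m : V -> V -> V) : bilinear_op m -> forall x y z, m (x + y) z = m x z + m y z.
Proof. by move=> [h1 _] x y z; have := h1 1 x y z; rewrite !scale1r. Qed.
Lemma bil_N1 (m : V -> V -> V) : bilinear_op m -> forall x z, m (- x) z = - m x z.
Proof.
move=> [h1 _] x z. have := h1 (-1) x 0 z.
rewrite addr0 !scaleN1r => ->.
have h0 : m 0 z = 0.
  have h := h1 1 0 0 z; rewrite !scale1r addr0 in h.
  by apply: (addrI (m 0 z)); rewrite addr0 -h.
by rewrite h0 addr0.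
Qed.
Lemma bil_D2 (m : V -> V -> V) : bilinear_op m -> forall x y z, m x (y + z) = m x y + m x z.
Proof. by move=> [_ h2] x y z; have := h2 1 x y z; rewrite !scale1r. Qed.
Lemma bil_N2 (m : V -> V -> V) : bilinear_op m -> forall x z, m x (- z) = - m x z.
Proof.
move=> [_ h2] x z. have := h2 (-1) x z 0.
rewrite addr0 !scaleN1r => ->.
have h0 : m x 0 = 0.
  have h := h2 1 x 0 0; rewrite !scale1r addr0 in h.
  by apply: (addrI (m x 0)); rewrite addr0 -h.
by rewrite h0 addr0.
Qed.
End Helpers.
Arguments bil_D1 {K V m}.
Arguments bil_D2 {K V m}.
Arguments bil_N1 {K V m}.
Arguments bil_N2 {K V m}.

Theorem corollary4p9 (K : fieldType) (V : vectType K)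
  (br mul : V -> V -> V) :
  [pchar K] =i pred0 ->
  is_lie_bracket br ->
  two_step_nilpotent br ->
  (forall z, in_center br z -> in_derived br z) ->
  is_LR_structure br mul ->
  derived_mul_zero br mul ->
  complete_LR mul.
Proof.
move=> ch [bb balt _] nil2 cen [mb comm ass der] dz x.
have antis a b : br a b = - br b a.
  have := balt (a + b); rewrite (bil_D1 bb) !(bil_D2 bb) !balt add0r addr0.
  by move/eqP; rewrite addr_eq0 => /eqP.
have brmul a b v : mul (br a b) v = 0.
  by apply: dz; exists [:: (a, b)]; rewrite big_seq1.
have mulbr v a b : mul v (br a b) = 0.
  have := comm v (br a b); rewrite brmul subr0 => ->.
  by rewrite antis nil2 oppr0.
have F4 v a c : br (mul v a) c = - br a (mul v c).
  have := der v a c; rewrite mulbr => /eqP; rewrite eq_sym addr_eq0 => /eqP.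
  done.
have mulC a b : mul b a = mul a b - br a b.
  by rewrite -(comm a b) opprB addrC subrK.
have swap12 a b e : br a (mul b e) = br b (mul a e).
  rewrite -[br a _]opprK -F4 mulC (bil_D1 bb) (bil_N1 bb) nil2 oppr0 addr0.
  by rewrite F4 opprK.
have swap34 b c d : mul b (mul c d) = mul b (mul d c).
  by rewrite (mulC d c) (bil_D2 mb) (bil_N2 mb) mulbr oppr0 addr0.
have key a b c d : br d (mul c (mul a b)) = - br b (mul a (mul c d)).
  rewrite -F4 antis F4 opprK //.
pose H z y := br z (mul x (mul x y)).
have HH z y : H z y = 0.
  have e1 : H z y = - H z y.
    rewrite /H {1}key; congr (- _).
    by rewrite (swap12 y x) (ass y x z) (swap34 x y z) (ass x z y) (swap12 x z).
  have : (2%:R : K) *: H z y = 0.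
    by rewrite scaler_nat mulr2n {1}e1 addNr.
  move/eqP; rewrite scaler_eq0 => /orP [|/eqP //].
  by move/pcharf0P : ch => ->.
exists 3%N => y.
set u := mul x (mul x y).
have uc : in_center br u by move=> z; rewrite antis; have := HH z y; rewrite /H -/u => ->; rewrite oppr0.
have ud := cen u uc.
rewrite /= -/u.
have := comm x u; rewrite (dz _ x ud) subr0 => ->.
by rewrite antis uc oppr0.
Qed.
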